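(* Let $m\ge n$ and let $C_1,\dots,C_m\subseteq\mathbb{S}$ be nonempty s-convex sets. If $\bigcap_{j\in J}C_j\neq\emptyset$ for every $J\subseteq\{1,\dots,m\}$ with $\operatorname{card}J=n$, and $\bigcup_{j\in J}C_j\neq\mathbb{S}$ for every $J\subseteq\{1,\dots,m\}$ with $\operatorname{card}J=n+1$, then $\bigcap_{i=1}^mC_i\neq\emptyset$.
   Context: Standing setting: $n\ge 2$; $o$ denotes the zero vector of $\mathbb{R}^n$. $\Phi:\mathbb{R}^n\to\mathbb{R}_+:=[0,\infty)$ is a continuous function with $\Phi(tx)=t\Phi(x)$ for all $x\in\mathbb{R}^n$, $t\ge 0$, and $\Phi(x)=0$ iff $x=o$. Set $\mathbb{S}:=\{x\in\mathbb{R}^n\mid \Phi(x)=1\}$ and $\rho:\mathbb{R}^n\to\{o\}\cup\mathbb{S}$, $\rho(x):=x/\Phi(x)$ for $x\neq o$, $\rho(o):=o$. For $x,y\in\mathbb{S}$, $\lambda\in[0,1]$, $\lambda x+_s(1-\lambda)y:=\rho(\lambda x+(1-\lambda)y)$. A nonempty set $S\subseteq\mathbb{S}$ is called s-convex if $\lambda x+_s(1-\lambda)y\in S$ for all $x,y\in S$ and $\lambda\in[0,1]$. *)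

(* Defs.v *)
From HB Require Import structures.
From mathcomp Require Import all_boot all_order all_algebra.
From mathcomp Require Import all_classical all_reals all_analysis.
Set Implicit Arguments. Unset Strict Implicit. Unset Printing Implicit Defensive.
Import Order.TTheory GRing.Theory Num.Theory numFieldNormedType.Exports.
Local Open Scope classical_set_scope.
Local Open Scope ring_scope.

Definition gsphere (R : realType) (n : nat) (Phi : 'rV[R]_n -> R) : set 'rV[R]_n :=
  [set x | Phi x = 1].

Definition grho (R : realType) (n : nat) (Phi : 'rV[R]_n -> R) (x : 'rV[R]_n)
  : 'rV[R]_n :=
  if x == 0 then 0 else (Phi x)^-1 *: x.

Definition scomb (R : realType) (n : nat) (Phi : 'rV[R]_n -> R) (lam : R)
  (x y : 'rV[R]_n) : 'rV[R]_n :=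
  grho Phi (lam *: x + (1 - lam) *: y).

Definition s_convex (R : realType) (n : nat) (Phi : 'rV[R]_n -> R)
  (S : set 'rV[R]_n) : Prop :=
  [/\ S !=set0, S `<=` gsphere Phi &
      forall x y lam, S x -> S y -> 0 <= lam -> lam <= 1 -> S (scomb Phi lam x y)].

(* Main.v *)
Require Import Defs.
From HB Require Import structures.
From mathcomp Require Import all_boot all_order all_algebra.
From mathcomp Require Import all_classical all_reals all_analysis.
From mathcomp Require Import ring lra.
Import Order.TTheory GRing.Theory Num.Theory numFieldNormedType.Exports.
Local Open Scope classical_set_scope.
Local Open Scope ring_scope.
Lemma dependence (R : realType) (n k : nat) (v : 'I_k -> 'rV[R]_n) : (n < k)%N ->
  exists b : 'I_k -> R, (exists i, b i != 0) /\ \sum_i b i *: v i = 0.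
Proof.
move=> hnk; pose W := \matrix_(i < k) v i.
have hK : kermx W != 0.
  rewrite -mxrank_eq0 mxrank_ker subn_eq0 -ltnNge.
  exact: leq_ltn_trans (rank_leq_col W) hnk.
have [i [j hij]] : exists i j, kermx W i j != 0.
  apply/not_existsP => h; move/eqP: hK; apply; apply/matrixP => i j.
  rewrite [RHS]mxE; apply/eqP; apply: contra_notT (h i) => hij; by exists j.
exists (fun l => row i (kermx W) 0 l); split; first by exists j; rewrite mxE.
rewrite -[LHS](eq_bigr _ (fun l _ => congr1 (fun z => _ *: z) (rowK v l))).
by rewrite -mulmx_sum_row -row_mul mulmx_ker row0.
Qed.

Section S.
Variables (R : realType) (n : nat) (Phi : 'rV[R]_n -> R).
Hypothesis hpos : forall x, 0 <= Phi x.
Hypothesis hom : forall x t, 0 <= t -> Phi (t *: x) = t * Phi x.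
Hypothesis h0 : forall x, Phi x = 0 <-> x = 0.

Lemma Phi_gt0 x : x != 0 -> 0 < Phi x.
Proof.
move=> hx; rewrite lt_def hpos andbT; apply/eqP => /h0 hx0; by rewrite hx0 eqxx in hx.
Qed.

Lemma grhoZ c y : 0 < c -> y != 0 -> grho Phi (c *: y) = grho Phi y.
Proof.
move=> hc hy; rewrite /grho scaler_eq0 (negbTE hy) (gt_eqF hc) /=.
rewrite hom ?ltW // scalerA; congr (_ *: _).
have := Phi_gt0 _ hy => hp; field; apply/andP; split; exact: lt0r_neq0.
Qed.

Lemma grho_sph x : Phi x = 1 -> grho Phi x = x.
Proof.
move=> hx; rewrite /grho; case: eqP => [e|_]; last by rewrite hx invr1 scale1r.
by move: hx; rewrite e; have [_ ->] := h0 0 => //; move/eqP; rewrite oner_eq0 eq_sym.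
Qed.

Lemma grhoK y : y != 0 -> y = Phi y *: grho Phi y.
Proof.
move=> hy; rewrite /grho (negbTE hy) scalerA divff ?scale1r //.
exact: lt0r_neq0 (Phi_gt0 _ hy).
Qed.

Definition cone (S : set 'rV[R]_n) y := y != 0 /\ S (grho Phi y).

Lemma sconv_ne0 S : s_convex Phi S -> ~ S 0.
Proof.
case=> _ hs _ /hs; rewrite /gsphere /=; have [_ ->] := h0 0 => //.
by move/eqP; rewrite eq_sym oner_eq0.
Qed.

Lemma cone_add S y z : s_convex Phi S -> cone S y -> cone S z -> cone S (y + z).
Proof.
move=> hS [hy Sy] [hz Sz].
set a := Phi y; set b := Phi z.
have ha : 0 < a by exact: Phi_gt0.
have hb : 0 < b by exact: Phi_gt0.
set lam := a / (a + b).
set u := lam *: grho Phi y + (1 - lam) *: grho Phi z.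
have hab : 0 < a + b by rewrite addr_gt0.
have E : y + z = (a + b) *: u.
  rewrite /u scalerDr !scalerA.
  have -> : (a + b) * lam = a by rewrite /lam; field; exact: lt0r_neq0.
  have -> : (a + b) * (1 - lam) = b by rewrite /lam; field; exact: lt0r_neq0.
  by rewrite -grhoK // -grhoK.
case: (hS) => _ _ hc.
have Su : S (grho Phi u).
  apply: (hc _ _ lam Sy Sz).
  - by rewrite /lam divr_ge0 // ltW.
  - by rewrite /lam ler_pdivrMr // mul1r lerDl ltW.
have hu : u != 0.
  apply/eqP => u0; move: Su; rewrite u0 /grho eqxx; exact: sconv_ne0.
split; rewrite E; first by rewrite scaler_eq0 negb_or hu gt_eqF.
by rewrite grhoZ.
Qed.

Lemma cone_base S x c : s_convex Phi S -> S x -> 0 < c -> cone S (c *: x).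
Proof.
move=> hS Sx hc; case: (hS) => _ hsub _.
have hx : x != 0 by apply/eqP => x0; apply: (sconv_ne0 _ hS); rewrite -x0.
split; first by rewrite scaler_eq0 negb_or hx gt_eqF.
by rewrite grhoZ // grho_sph //; exact: hsub.
Qed.

Lemma cone_sum S k (c : 'I_k -> R) (v : 'I_k -> 'rV[R]_n) :
  s_convex Phi S -> (forall i, 0 <= c i) -> (forall i, 0 < c i -> S (v i)) ->
  (exists i, 0 < c i) -> cone S (\sum_i c i *: v i).
Proof.
move=> hS hc hv [i0 hi0].
rewrite (bigD1 i0) //=.
have : (fun y => y = 0 \/ cone S y) (\sum_(i < k | i != i0) c i *: v i).
  apply: (big_ind (fun y => y = 0 \/ cone S y)) => [|y z [->|hy] [->|hz]|i _].
  - by left.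
  - by left; rewrite addr0.
  - by right; rewrite add0r.
  - by right; rewrite addr0.
  - by right; exact: cone_add.
  - have [ci0|ci0] := eqVneq (c i) 0; first by left; rewrite ci0 scale0r.
    have cp : 0 < c i by rewrite lt_def ci0 hc.
    right; apply: cone_base => //; exact: hv.
case=> [->|h]; first by rewrite addr0; exact: cone_base (hv _ hi0) hi0.
apply: cone_add => //; exact: cone_base (hv _ hi0) hi0.
Qed.

Lemma helly_pos k (C : 'I_k -> set 'rV[R]_n) (v : 'I_k -> 'rV[R]_n) (b : 'I_k -> R) :
  (forall i, s_convex Phi (C i)) -> (forall i j, i != j -> C j (v i)) ->
  \sum_i b i *: v i = 0 -> (exists i, 0 < b i) -> (exists j, b j <= 0) ->
  exists x, forall j, C j x.
Proof.
move=> hC hv hsum [i0 hi0] [j0 hj0].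
pose bp i := if 0 <= b i then b i else 0.
pose bm i := if 0 <= b i then 0 else - b i.
have hb i : b i = bp i - bm i by rewrite /bp /bm; case: ifP => _; rewrite ?subr0 ?sub0r ?opprK.
have E : \sum_i bp i *: v i = \sum_i bm i *: v i.
  apply/eqP; rewrite -subr_eq0 -sumrB -[X in _ == X]hsum; apply/eqP.
  by apply: eq_bigr => i _; rewrite -scalerBl -hb.
set w := \sum_i bp i *: v i.
have bp_ge0 i : 0 <= bp i by rewrite /bp; case: ifP.
have bm_ge0 i : 0 <= bm i by rewrite /bm; case: ifP => // /negbT; rewrite -ltNge oppr_ge0 => /ltW.
have Hle j : b j <= 0 -> cone (C j) w.
  move=> hj; apply: cone_sum => //.
  - move=> i; rewrite /bp; case: ifP => [_ hbi|]; last by rewrite ltxx.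
    apply: hv; apply/eqP => eij; move: hj; rewrite -eij => /(lt_le_trans hbi); by rewrite ltxx.
  - by exists i0; rewrite /bp ltW // hi0.
have wn0 : w != 0 by case: (Hle j0 hj0).
have [i1 hi1] : exists i, b i < 0.
  apply/not_existsP => hn; move/eqP: wn0; apply; rewrite /w E.
  apply: big1 => i _; rewrite /bm; case: ifP => [_|]; first by rewrite scale0r.
  by move/negbT; rewrite -ltNge => /hn.
have Hgt j : 0 < b j -> cone (C j) w.
  move=> hj; rewrite /w E; apply: cone_sum => //.
  - move=> i; rewrite /bm; case: ifP => [_|hbi _]; first by rewrite ltxx.
    apply: hv; apply/eqP => eij; move: hbi; by rewrite eij (ltW hj).
  - by exists i1; rewrite /bm leNgt hi1 /= oppr_gt0.
exists (grho Phi w) => j; case: (leP (b j) 0) => hj; first by case: (Hle j hj).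
by case: (Hgt j hj).
Qed.

Lemma helly k (C : 'I_k -> set 'rV[R]_n) (v : 'I_k -> 'rV[R]_n) (b : 'I_k -> R) :
  (forall i, s_convex Phi (C i)) -> (forall i j, i != j -> C j (v i)) ->
  \sum_i b i *: v i = 0 -> (exists i, b i != 0) -> (exists j, b j <= 0) ->
  (exists j, 0 <= b j) -> exists x, forall j, C j x.
Proof.
move=> hC hv hsum [i0 hi0] hle hge.
have [hp|hn] := pselect (exists i, 0 < b i); first exact: (@helly_pos k C v b hC hv hsum hp).
apply: (@helly_pos k C v (fun i => - b i)) => //.
- rewrite (eq_bigr (fun i => - (b i *: v i))); last by move=> i _; rewrite scaleNr.
  by rewrite sumrN hsum oppr0.
- exists i0; rewrite oppr_gt0 lt_neqAle hi0 /= leNgt; apply/negP => h; apply: hn; by exists i0.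
- by case: hge => j hj; exists j; rewrite oppr_le0.
Qed.


Lemma pcase k (C : 'I_k.+1 -> set 'rV[R]_n) (v : 'I_k.+1 -> 'rV[R]_n) (a : 'I_k.+1 -> R) p :
  (n < k.+1)%N ->
  (forall i, s_convex Phi (C i)) -> (forall i j, i != j -> C j (v i)) ->
  (forall i, 0 < a i) -> \sum_i a i *: v i = 0 ->
  gsphere Phi p -> (forall j, ~ C j p) -> exists x, forall j, C j x.
Proof.
move=> hnk hC hv ha hsa hp hnp.
have [b [[i1 hb1] hsb]] := @dependence R n k.+1 (fun i => if i == ord0 then p else v i) hnk.
have [b0|b0] := eqVneq (b ord0) 0.
  apply: (@helly k.+1 C v b) => //.
  - apply: (etrans _ hsb); apply: eq_bigr => i _; case: eqP => // ->; by rewrite b0 !scale0r.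
  - by exists i1.
  - by exists ord0; rewrite b0.
  - by exists ord0; rewrite b0.
exfalso.
pose be i := if i == ord0 then 0 else - b i / b ord0.
have Hbe : \sum_i be i *: v i = p.
  move: hsb; rewrite !big_ord_recl eqxx /=.
  rewrite (eq_bigr (fun l => b (lift ord0 l) *: v (lift ord0 l))); last first.
    by [].
  move=> E.
  have E' : \sum_(l < k) b (lift ord0 l) *: v (lift ord0 l) = - (b ord0 *: p).
    by apply/eqP; rewrite -addr_eq0 addrC E.
  rewrite /be eqxx scale0r add0r.
  rewrite (eq_bigr (fun l => (- (b ord0)^-1) *: (b (lift ord0 l) *: v (lift ord0 l)))); last first.
    move=> l _; rewrite eq_sym (negbTE (neq_lift _ _)) scalerA; congr (_ *: _).
    by rewrite !mulNr mulrC.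
  by rewrite -scaler_sumr E' scalerN scaleNr opprK scalerA mulVf // scale1r.
case: (@arg_minP _ _ _ (ord0 : 'I_k.+1) xpredT (fun i => be i / a i) isT) => kk _ hmin.
pose t := be kk / a kk.
pose g i := be i - t * a i.
have gge i : 0 <= g i.
  by rewrite /g subr_ge0 -ler_pdivlMr //; exact: hmin.
have gk : g kk = 0 by rewrite /g /t divfK ?subrr // lt0r_neq0.
have Hg : \sum_i g i *: v i = p.
  rewrite (eq_bigr (fun i => be i *: v i - t *: (a i *: v i))); last first.
    by move=> i _; rewrite /g scalerBl scalerA.
  by rewrite sumrB -scaler_sumr hsa scaler0 subr0.
have pn0 : p != 0.
  apply/eqP => p0; move: hp; rewrite /gsphere /= p0; have [_ ->] := h0 0 => //.
  by move/eqP; rewrite eq_sym oner_eq0.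
have [i2 hi2] : exists i, 0 < g i.
  apply/not_existsP => hn; move/eqP: pn0; apply; rewrite -Hg; apply: big1 => i _.
  have : g i = 0 by apply/eqP; rewrite eq_le gge andbT leNgt; apply/negP => /hn.
  by move=> ->; rewrite scale0r.
have : cone (C kk) (\sum_i g i *: v i).
  apply: cone_sum => //; last by exists i2.
  move=> i hgi; apply: hv; apply/eqP => eik; move: hgi; by rewrite eik gk ltxx.
rewrite Hg => -[_]; rewrite grho_sph //; exact: hnp.
Qed.

Lemma step k (C : 'I_k.+1 -> set 'rV[R]_n) (v : 'I_k.+1 -> 'rV[R]_n) :
  (n <= k)%N -> (forall i, s_convex Phi (C i)) -> (forall i j, i != j -> C j (v i)) ->
  (forall J : {set 'I_k.+1}, #|J| = n.+1 ->
     exists x, gsphere Phi x /\ forall j, j \in J -> ~ C j x) ->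
  exists x, forall j, C j x.
Proof.
move=> hnk hC hv h2.
have [hlt|hge] := ltnP n k.
  have [b [[l hl] hs]] := @dependence R n k (fun l : 'I_k => v (lift ord0 l)) hlt.
  pose b' i := if unlift ord0 i is Some l then b l else 0.
  apply: (@helly k.+1 C v b') => //.
  - rewrite big_ord_recl /b' unlift_none scale0r add0r -[RHS]hs.
    by apply: eq_bigr => i _; rewrite liftK.
  - by exists (lift ord0 l); rewrite /b' liftK.
  - by exists ord0; rewrite /b' unlift_none.
  - by exists ord0; rewrite /b' unlift_none.
have ekn : k = n by apply/eqP; rewrite eqn_leq hge hnk.
have [p [hp hnp]] := h2 [set: _]%SET ltac:(by rewrite cardsT card_ord ekn).
have hnk1 : (n < k.+1)%N by rewrite ekn.
have [a [[i0 ha0] hsa]] := @dependence R n k.+1 v hnk1.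
have [hle|hle] := pselect (exists j, a j <= 0);
  have [hgt|hgt] := pselect (exists j, 0 <= a j).
- by apply: (@helly k.+1 C v a) => //; exists i0.
- apply: (@pcase k C v (fun i => - a i) p) => //.
  + move=> i; rewrite oppr_gt0 ltNge; apply/negP => h; apply: hgt; by exists i.
  + rewrite (eq_bigr (fun i => - (a i *: v i))); last by move=> i _; rewrite scaleNr.
    by rewrite sumrN hsa oppr0.
  + by move=> j; apply: hnp; rewrite inE.
- apply: (@pcase k C v a p) => //.
  + move=> i; rewrite ltNge; apply/negP => h; apply: hle; by exists i.
  + by move=> j; apply: hnp; rewrite inE.
- exfalso; case: (leP (a i0) 0) => h; [apply: hle | apply: hgt]; exists i0 => //.
  exact: ltW.
Qed.

Lemma main_ind d : forall (C : 'I_(d + n) -> set 'rV[R]_n),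
  (forall i, s_convex Phi (C i)) ->
  (forall J : {set 'I_(d + n)}, #|J| = n -> exists x, forall j, j \in J -> C j x) ->
  (forall J : {set 'I_(d + n)}, #|J| = n.+1 ->
     exists x, gsphere Phi x /\ forall j, j \in J -> ~ C j x) ->
  exists x, forall i, C i x.
Proof.
elim: d => [|d IH] C hC h1 h2.
  have [x hx] := h1 [set: _]%SET ltac:(by rewrite cardsT card_ord).
  by exists x => i; apply: hx; rewrite inE.
have hv0 : forall i : 'I_(d + n).+1, exists y, forall l : 'I_(d + n), C (lift i l) y.
  move=> i; apply: (IH (fun l => C (lift i l))).
  - by move=> l; exact: hC.
  - move=> J' hJ'; have [x hx] := h1 [set lift i l | l in J']%SET ltac:(by rewrite card_imset //; exact: lift_inj).
    by exists x => l hl; apply: hx; rewrite imset_f.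
  - move=> J' hJ'; have [x [hx1 hx]] := h2 [set lift i l | l in J']%SET ltac:(by rewrite card_imset //; exact: lift_inj).
    by exists x; split => // l hl; apply: hx; rewrite imset_f.
case: (choice hv0) => v hv.
apply: (@step (d + n) C v) => //.
- exact: leq_addl.
- by move=> i j /unlift_some [l -> _]; exact: hv.
Qed.
End S.
Theorem mainTheorem14 (R : realType) (n : nat) (Phi : 'rV[R]_n -> R) :
  (2 <= n)%N ->
  continuous Phi ->
  (forall x, 0 <= Phi x) ->
  (forall x t, 0 <= t -> Phi (t *: x) = t * Phi x) ->
  (forall x, Phi x = 0 <-> x = 0) ->
  forall (m : nat) (C : 'I_m -> set 'rV[R]_n),
  (n <= m)%N ->
  (forall i, s_convex Phi (C i)) ->
  (forall J : {set 'I_m}, #|J| = n ->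
     exists x, forall j, j \in J -> C j x) ->
  (forall J : {set 'I_m}, #|J| = n.+1 ->
     exists x, gsphere Phi x /\ forall j, j \in J -> ~ C j x) ->
  exists x, forall i, C i x.
Proof.
move=> _ _ hpos hom h0 m C hnm.
have := @main_ind R n Phi hpos hom h0 (m - n).
rewrite subnK //; exact.
Qed.
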